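(* Assume $V$ satisfies (V1)–(V3). Then $|\nabla V(x)\cdot x|\to0$ as $|x|\to\infty$.
   Context: $N\ge3$, $\alpha\in(0,N)$. (V1) $V$ continuous, $V\ge0$, $V_\infty:=\lim_{|x|\to\infty}V(x)$ exists and is $>0$; (V2) $V(x)\le V_\infty$ for all $x$; (V3) $V\in C^1(\mathbb R^N)$ and there is $\theta\in[0,1)$ such that for every $x\neq0$ the map $t\mapsto \frac{NV(tx)+\nabla V(tx)\cdot(tx)}{t^\alpha}+\frac{(N-2)^3\theta}{4t^{\alpha+2}|x|^2}$ is nonincreasing on $(0,\infty)$. *)

(* Defs.v *)
From Stdlib Require Import Reals.
From mathcomp Require Import ssreflect ssrfun ssrbool eqtype ssrnat seq fintype bigop.
Open Scope R_scope.

Definition vec (N : nat) := 'I_N -> R.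

Definition vzero {N : nat} : vec N := fun _ => 0.
Definition vadd {N : nat} (x y : vec N) : vec N := fun i => x i + y i.
Definition vsub {N : nat} (x y : vec N) : vec N := fun i => x i - y i.
Definition vscal {N : nat} (t : R) (x : vec N) : vec N := fun i => t * x i.

Definition dot {N : nat} (x y : vec N) : R := \big[Rplus/0]_(i < N) (x i * y i).
Definition vnorm {N : nat} (x : vec N) : R := sqrt (dot x x).

Definition cont_scalar {N : nat} (V : vec N -> R) : Prop :=
  forall x eps, 0 < eps -> exists delta, 0 < delta /\
    forall y, vnorm (vsub y x) < delta -> Rabs (V y - V x) < eps.

Definition cont_field {N : nat} (g : vec N -> vec N) : Prop :=
  forall x eps, 0 < eps -> exists delta, 0 < delta /\
    forall y, vnorm (vsub y x) < delta -> vnorm (vsub (g y) (g x)) < eps.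

Definition is_gradient {N : nat} (V : vec N -> R) (g : vec N -> vec N) : Prop :=
  forall x eps, 0 < eps -> exists delta, 0 < delta /\
    forall h, vnorm h < delta ->
      Rabs (V (vadd x h) - V x - dot (g x) h) <= eps * vnorm h.

Definition C1_with_gradient {N : nat} (V : vec N -> R) (g : vec N -> vec N) : Prop :=
  is_gradient V g /\ cont_field g.

Definition lim_infty {N : nat} (f : vec N -> R) (l : R) : Prop :=
  forall eps, 0 < eps -> exists Rr, forall x, Rr < vnorm x -> Rabs (f x - l) < eps.

(* Main.v *)
Require Import Defs.
From Stdlib Require Import Reals Lra FunctionalExtensionality.
From mathcomp Require Import ssreflect ssrfun ssrbool eqtype ssrnat seq fintype bigop.
Open Scope R_scope.

Lemma dot_scal_r {N : nat} (x y : vec N) c : dot x (vscal c y) = c * dot x y.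
Proof.
  rewrite /dot /vscal.
  apply: (big_ind2 (fun a b => a = c * b)).
  - ring.
  - move=> x1 x2 y1 y2 -> ->; ring.
  - move=> i _; ring.
Qed.

Lemma dot_scal_l {N : nat} (x y : vec N) c : dot (vscal c x) y = c * dot x y.
Proof.
  rewrite /dot /vscal.
  apply: (big_ind2 (fun a b => a = c * b)).
  - ring.
  - move=> x1 x2 y1 y2 -> ->; ring.
  - move=> i _; ring.
Qed.

Lemma dot_nonneg {N : nat} (y : vec N) : 0 <= dot y y.
Proof.
  rewrite /dot. apply: (big_ind (fun a => 0 <= a)).
  - lra.
  - move=> a b Ha Hb; lra.
  - move=> i _; nra.
Qed.

Lemma vnorm_scal {N : nat} (y : vec N) c : vnorm (vscal c y) = Rabs c * vnorm y.
Proof.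
  rewrite /vnorm dot_scal_l dot_scal_r -Rmult_assoc.
  rewrite sqrt_mult; [| nra | apply dot_nonneg].
  rewrite -sqrt_Rsqr_abs /Rsqr. reflexivity.
Qed.

Lemma vnorm_nonneg {N : nat} (y : vec N) : 0 <= vnorm y.
Proof. apply sqrt_pos. Qed.

Lemma vscal_add {N : nat} (y : vec N) u h : vadd (vscal u y) (vscal h y) = vscal (u + h) y.
Proof. apply functional_extensionality => i. rewrite /vadd /vscal. ring. Qed.

Lemma vnorm_zero {N : nat} : vnorm (@vzero N) = 0.
Proof.
  have -> : (@vzero N) = vscal 0 vzero.
  { apply functional_extensionality => i. rewrite /vscal /vzero. ring. }
  rewrite vnorm_scal Rabs_R0. ring.
Qed.

Lemma deriv_phi {N : nat} (V : vec N -> R) g (y : vec N) u :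
  is_gradient V g ->
  derivable_pt_lim (fun u => V (vscal u y)) u (dot (g (vscal u y)) y).
Proof.
  move=> HG eps Heps.
  set c := vnorm y + 1.
  have Hc : 0 < c by have := vnorm_nonneg y; rewrite /c; lra.
  have He' : 0 < eps / (2 * c) by apply Rdiv_lt_0_compat; lra.
  case: (HG (vscal u y) _ He') => delta [Hd Hb].
  have Hdc : 0 < delta / c by apply Rdiv_lt_0_compat.
  exists (mkposreal _ Hdc) => h Hh0 Hh /=.
  have Hh' : Rabs h * c < delta.
  { have := Rmult_lt_compat_r c _ _ Hc Hh. rewrite /Rdiv Rmult_assoc Rinv_l; lra. }
  have Hny : vnorm (vscal h y) < delta.
  { rewrite vnorm_scal. have := Rabs_pos h. have := vnorm_nonneg y.
    rewrite /c in Hh' |- *. nra. }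
  have := Hb _ Hny. rewrite vscal_add dot_scal_r vnorm_scal.
  set D := dot (g (vscal u y)) y.
  set Q := V (vscal (u + h) y) - V (vscal u y).
  move=> Hq.
  have -> : Q / h - D = (Q - D * h) / h by field.
  rewrite /Rdiv Rabs_mult Rabs_inv.
  have Hah : 0 < Rabs h by apply Rabs_pos_lt.
  apply (Rmult_lt_reg_r (Rabs h)) => //.
  rewrite /Rdiv Rmult_assoc Rinv_l; last lra.
  have -> : Q - D * h = Q - h * D by ring.
  rewrite Rmult_1_r. apply: (Rle_lt_trans _ _ _ Hq).
  have := vnorm_nonneg y.
  have Hx : eps / (2 * c) * c = eps / 2 by field; lra.
  move=> Hy.
  have : eps / (2 * c) * (Rabs h * vnorm y) <= eps / (2*c) * (Rabs h * c).
  { apply Rmult_le_compat_l; [lra|]. apply Rmult_le_compat_l; [lra|]. rewrite /c; lra. }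
  nra.
Qed.

Lemma dpl_ext f g x l : (forall z, f z = g z) -> derivable_pt_lim f x l -> derivable_pt_lim g x l.
Proof. move=> H. have -> : g = f by apply functional_extensionality => z; rewrite H. done. Qed.

Lemma dpl_val f x l l' : l = l' -> derivable_pt_lim f x l -> derivable_pt_lim f x l'.
Proof. by move=> ->. Qed.

Lemma dexp c s : derivable_pt_lim (fun s => exp (c * s)) s (c * exp (c * s)).
Proof.
  have H1 : derivable_pt_lim (fun s => c * s) s c.
  { apply: (dpl_val _ _ (c * 1)); first ring.
    apply: dpl_ext (derivable_pt_lim_scal id c s 1 (derivable_pt_lim_id s)).
    move=> z; reflexivity. }
  have := derivable_pt_lim_comp _ exp s _ _ H1 (derivable_pt_lim_exp (c * s)).
  apply: (dpl_val _ _ _ _ _) => //; last ring.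
Qed.

Lemma decr_mvt H H' p q : p < q ->
  (forall s, p <= s <= q -> derivable_pt_lim H s (H' s)) ->
  (forall s, p <= s <= q -> H' s <= 0) -> H q <= H p.
Proof.
  move=> Hpq Hd Hn.
  case: (MVT_cor2 H H' p q Hpq Hd) => c [Heq Hc].
  have := Hn c ltac:(lra). move=> Hc'.
  have : H' c * (q - p) <= 0 by nra. lra.
Qed.

Lemma exp_mul_id a b c : a + b = c -> exp a * exp b = exp c.
Proof. move=> <-. by rewrite exp_plus. Qed.

Lemma oneD_upper psi W Nr a K Vinf eps L :
  (forall s, derivable_pt_lim psi s (W s)) -> 0 < a -> 0 <= K -> 0 < L ->
  (forall s, -L <= s <= 0 ->
     (Nr * psi 0 + W 0) + K <= (Nr * psi s + W s) * exp (-(a * s)) + K * exp (-((a + 2) * s))) ->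
  (forall s, Nr * psi s <= Nr * Vinf) ->
  psi 0 - psi (-L) <= eps ->
  2 * (Nr * psi 0 + W 0) * (1 - exp (-(a * L)))
    <= 2 * a * (Nr * Vinf) * L + 2 * a * eps + a * K * (exp (2 * L) - 1).
Proof.
  move=> Hd Ha HK HL Hm Hb He.
  set A := Nr * psi 0 + W 0.
  set M := Nr * Vinf.
  pose H s := 2 * A * exp (a * s) - 2 * a * M * s - 2 * a * psi s + a * K * exp (-2 * s).
  pose H' s := 2 * A * (a * exp (a * s)) - 2 * a * M - 2 * a * W s + a * K * (-2 * exp (-2 * s)).
  have Hdec : H 0 <= H (-L).
  { apply: (decr_mvt H H'); first lra.
    - move=> s _. rewrite /H /H'.
      apply: (dpl_ext (fun s => (2 * A * exp (a * s) - 2 * a * M * s - 2 * a * psi s) + a * K * exp (-2 * s))); first by move=> z.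
      apply: derivable_pt_lim_plus; last first.
      { apply: (dpl_ext (fun s => (a * K) * exp (-2 * s))); first by move=> z.
        apply: (derivable_pt_lim_scal (fun s => exp (-2 * s))). apply dexp. }
      apply: derivable_pt_lim_minus; last first.
      { apply: (derivable_pt_lim_scal psi). apply Hd. }
      apply: (dpl_val _ _ (2 * A * (a * exp (a * s)) - 2 * a * M * 1)); first ring.
      apply: derivable_pt_lim_minus.
      + apply: (derivable_pt_lim_scal (fun s => exp (a * s))). apply dexp.
      + apply: (derivable_pt_lim_scal id). apply derivable_pt_lim_id.
    - move=> s Hs. rewrite /H'.
      have Hx := Hm s Hs.
      have E1 : exp (-(a * s)) * exp (a * s) = 1 by rewrite (exp_mul_id _ _ 0) ?exp_0 //; ring.
      have E2 : exp (-((a + 2) * s)) * exp (a * s) = exp (-2 * s) by apply exp_mul_id; ring.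
      have Ep := exp_pos (a * s).
      have Ep2 := exp_pos (-2 * s).
      have Hy := Rmult_le_compat_r (exp (a * s)) _ _ (Rlt_le _ _ Ep) Hx.
      have Hz : A * exp (a * s) + K * exp (a * s) <= Nr * psi s + W s + K * exp (-2 * s).
      { have -> : Nr * psi s + W s + K * exp (-2 * s) =
          ((Nr * psi s + W s) * exp (-(a * s)) + K * exp (-((a + 2) * s))) * exp (a * s).
        { rewrite Rmult_plus_distr_r !Rmult_assoc E1 E2. ring. }
        rewrite /A. lra. }
      have Hk : 0 <= K * exp (a * s) by nra.
      have Hw : A * exp (a * s) - M - W s - K * exp (-2 * s) <= 0 by have := Hb s; rewrite /M; lra.
      have -> : 2 * A * (a * exp (a * s)) - 2 * a * M - 2 * a * W s + a * K * (-2 * exp (-2 * s))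
              = 2 * a * (A * exp (a * s) - M - W s - K * exp (-2 * s)) by ring.
      nra. }
  move: Hdec. rewrite /H.
  have -> : a * 0 = 0 by ring.
  have -> : -2 * 0 = 0 by ring.
  have -> : a * - L = - (a * L) by ring.
  have -> : -2 * - L = 2 * L by ring.
  rewrite exp_0 => Hdec.
  have : a * (psi 0 - psi (-L)) <= a * eps by apply Rmult_le_compat_l; lra.
  lra.
Qed.

Lemma oneD_lower psi W Nr a K Vinf eps L :
  (forall s, derivable_pt_lim psi s (W s)) -> 0 < a -> 0 <= K -> 0 < L ->
  (forall s, 0 <= s <= L ->
     (Nr * psi s + W s) * exp (-(a * s)) + K * exp (-((a + 2) * s)) <= (Nr * psi 0 + W 0) + K) ->
  (forall s, 0 <= s <= L -> Nr * (Vinf - eps) <= Nr * psi s) ->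
  - eps <= psi L - psi 0 ->
  - (a * eps) + a * (Nr * (Vinf - eps)) * L <= ((Nr * psi 0 + W 0) + K) * (exp (a * L) - 1).
Proof.
  move=> Hd Ha HK HL Hm Hb He.
  set B := Nr * psi 0 + W 0 + K.
  set M := Nr * (Vinf - eps).
  pose H s := a * psi s - B * exp (a * s) + a * M * s.
  pose H' s := a * W s - B * (a * exp (a * s)) + a * M * 1.
  have Hdec : H L <= H 0.
  { apply: (decr_mvt H H'); first lra.
    - move=> s _. rewrite /H /H'.
      apply: derivable_pt_lim_plus; last first.
      { apply: (derivable_pt_lim_scal id). apply derivable_pt_lim_id. }
      apply: derivable_pt_lim_minus.
      + apply: (derivable_pt_lim_scal psi). apply Hd.
      + apply: (derivable_pt_lim_scal (fun s => exp (a * s))). apply dexp.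
    - move=> s Hs. rewrite /H'.
      have Hx := Hm s Hs.
      have E1 : exp (-(a * s)) * exp (a * s) = 1 by rewrite (exp_mul_id _ _ 0) ?exp_0 //; ring.
      have E2 : exp (-((a + 2) * s)) * exp (a * s) = exp (-2 * s) by apply exp_mul_id; ring.
      have Ep := exp_pos (a * s).
      have Ep2 := exp_pos (-2 * s).
      have Hy := Rmult_le_compat_r (exp (a * s)) _ _ (Rlt_le _ _ Ep) Hx.
      have Hz : Nr * psi s + W s + K * exp (-2 * s) <= B * exp (a * s).
      { have -> : Nr * psi s + W s + K * exp (-2 * s) =
          ((Nr * psi s + W s) * exp (-(a * s)) + K * exp (-((a + 2) * s))) * exp (a * s).
        { rewrite Rmult_plus_distr_r !Rmult_assoc E1 E2. ring. }
        rewrite /B. lra. }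
      have Hk : 0 <= K * exp (-2 * s) by nra.
      have Hw : W s - B * exp (a * s) + M <= 0 by have := Hb s Hs; rewrite /M; lra.
      have -> : a * W s - B * (a * exp (a * s)) + a * M * 1
              = a * (W s - B * exp (a * s) + M) by ring.
      nra. }
  move: Hdec. rewrite /H.
  have -> : a * 0 = 0 by ring.
  rewrite exp_0 => Hdec.
  have : a * (- eps) <= a * (psi L - psi 0) by apply Rmult_le_compat_l; lra.
  rewrite /B /M in Hdec |- *. lra.
Qed.

Lemma final_upper A a L M eps K E2 e1 Nr psi0 w eta :
  A = Nr * psi0 + w -> 0 < a -> 0 < L -> a * L <= 1 -> 0 < e1 -> e1 * (1 + a * L) <= 1 ->
  0 <= K -> 0 < M -> 0 < eta -> 0 <= eps -> 1 <= E2 ->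
  2 * A * (1 - e1) <= 2 * a * M * L + 2 * a * eps + a * K * (E2 - 1) ->
  M - Nr * eps <= Nr * psi0 ->
  a * L * M <= eta / 4 -> Nr * eps <= eta / 16 -> eps <= eta * L / 16 -> K * E2 <= eta * L / 16 ->
  w < eta.
Proof.
  move=> HA Ha HL HaL He1 He1b HK HM Heta Heps HE2 HU Hpsi H1 H2 H3 H4.
  apply Rnot_le_lt => Hw.
  have HApos : M - Nr * eps + eta <= A by rewrite HA; lra.
  have Apos : 0 < A by lra.
  set Z := 2 * M * L + 2 * eps + K * E2.
  have HZ : 0 <= Z by rewrite /Z; nra.
  have HaL0 : 0 <= a * L by nra.
  have S1 : a * L <= (1 - e1) * (1 + a * L) by nra.
  have S0 : 2 * a * M * L + 2 * a * eps + a * K * (E2 - 1) <= a * Z by rewrite /Z; nra.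
  have S2 : 2 * A * (a * L) <= (1 + a * L) * (a * Z).
  { have : 2 * A * (a * L) <= 2 * A * ((1 - e1) * (1 + a * L)) by apply Rmult_le_compat_l; lra.
    have : 2 * A * ((1 - e1) * (1 + a * L)) = (1 + a * L) * (2 * A * (1 - e1)) by ring.
    have : (1 + a * L) * (2 * A * (1 - e1)) <= (1 + a * L) * (a * Z)
      by apply Rmult_le_compat_l; lra.
    lra. }
  have S3 : 2 * A * L <= Z + a * L * Z.
  { apply (Rmult_le_reg_l a) => //.
    have -> : a * (2 * A * L) = 2 * A * (a * L) by ring.
    have -> : a * (Z + a * L * Z) = (1 + a * L) * (a * Z) by ring.
    exact S2. }
  have S4 : a * L * Z <= 2 * L * (a * L * M) + (2 * eps + K * E2).
  { have -> : a * L * Z = 2 * L * (a * L * M) + a * L * (2 * eps + K * E2) by rewrite /Z; ring.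
    have : a * L * (2 * eps + K * E2) <= 1 * (2 * eps + K * E2) by apply Rmult_le_compat_r; nra.
    lra. }
  have S5 : 2 * L * (M - Nr * eps + eta) <= 2 * A * L by nra.
  have S6 : 2 * L * (a * L * M) <= 2 * L * (eta / 4) by apply Rmult_le_compat_l; lra.
  have S7 : 2 * L * (eta - Nr * eps) <= 4 * eps + 2 * (K * E2) + 2 * L * (eta / 4).
  { rewrite /Z in S3 S4. lra. }
  have S8 : 2 * L * (eta - eta / 16) <= 2 * L * (eta - Nr * eps) by apply Rmult_le_compat_l; lra.
  nra.
Qed.

Lemma final_lower A a L M eps K e1 ea Nr psi0 w eta :
  A = Nr * psi0 + w -> 0 < a -> 0 < L -> 0 < ea -> e1 * ea = 1 -> 1 - a * L <= e1 -> 1 + a * L <= ea ->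
  0 <= K -> 0 < eta -> 0 <= eps -> 0 <= Nr ->
  - (a * eps) + a * (M - Nr * eps) * L <= (A + K) * (ea - 1) ->
  Nr * psi0 <= M ->
  eps < (M - Nr * eps) * L ->
  a * L * M <= eta / 4 -> Nr * eps <= eta / 16 -> eps <= eta * L / 16 -> K <= eta / 16 ->
  - eta < w.
Proof.
  move=> HA Ha HL Hea He Hea1 He1 HK Heta Heps HNr HLo Hpsi HP H1 H2 H3 H4.
  set P := (M - Nr * eps) * L - eps.
  have HPp : 0 < P by rewrite /P; lra.
  have HLo' : a * P <= (A + K) * (ea - 1) by rewrite /P; lra.
  have Xpos : 0 < A + K.
  { apply Rnot_le_lt => HX. have HaL0 : 0 <= a * L by nra.
    have : 0 <= ea - 1 by lra.
    have : (A + K) * (ea - 1) <= 0 by nra.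
    have : 0 < a * P by apply Rmult_lt_0_compat.
    lra. }
  have Hea2 : ea - 1 <= a * L * ea.
  { have : (1 - a * L) * ea <= e1 * ea by apply Rmult_le_compat_r; lra. lra. }
  have S1 : a * P <= (A + K) * (a * L * ea).
  { have : (A + K) * (ea - 1) <= (A + K) * (a * L * ea) by apply Rmult_le_compat_l; lra. lra. }
  have S2 : P <= (A + K) * L * ea.
  { apply (Rmult_le_reg_l a) => //. have -> : a * ((A + K) * L * ea) = (A + K) * (a * L * ea) by ring. exact S1. }
  have S3 : P * e1 <= (A + K) * L.
  { have He1p : 0 < e1 by apply Rnot_le_lt => h; nra.
    have : P * e1 <= (A + K) * L * ea * e1 by apply Rmult_le_compat_r; lra.
    have -> : (A + K) * L * ea * e1 = (A + K) * L * (e1 * ea) by ring. rewrite He. lra. }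
  have S4 : P * (1 - a * L) <= P * e1 by apply Rmult_le_compat_l; lra.
  have HaL0 : 0 <= a * L by nra.
  have S5 : P * (1 - a * L) >= P - a * L * ((M - Nr * eps) * L).
  { have : 0 <= a * L * eps by nra. have -> : P * (1 - a * L) = P - a * L * ((M - Nr * eps) * L) + a * L * eps by rewrite /P; ring. lra. }
  have S6 : a * L * ((M - Nr * eps) * L) <= L * (a * L * M).
  { have h1 : 0 <= Nr * eps by apply Rmult_le_pos. have h2 : 0 <= a * L * (Nr * eps) * L by apply Rmult_le_pos; [apply Rmult_le_pos|lra]. lra. }
  have S7 : (M - Nr * eps) * L - eps - L * (a * L * M) <= (A + K) * L by rewrite /P in S4 S5 S3 |- *; lra.
  have S8 : (M - Nr * eps) - eps / L - a * L * M <= A + K.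
  { apply (Rmult_le_reg_r L) => //.
    have -> : ((M - Nr * eps) - eps / L - a * L * M) * L = (M - Nr * eps) * L - eps - L * (a * L * M) by field; lra.
    exact S7. }
  have S9 : eps / L <= eta / 16.
  { apply (Rmult_le_reg_r L) => //. have -> : eps / L * L = eps by field; lra. lra. }
  rewrite HA in S8. lra.
Qed.

Lemma exp_le_mono s t : s <= t -> exp s <= exp t.
Proof. move=> H. case: (Rle_lt_or_eq_dec _ _ H) => h; [apply Rlt_le, exp_increasing, h | rewrite h; lra]. Qed.

Lemma vscal_1 {N : nat} (y : vec N) : vscal 1 y = y.
Proof. apply functional_extensionality => i. rewrite /vscal. ring. Qed.

Theorem lemma2p0 (N : nat) (alpha : R) (V : vec N -> R) (gradV : vec N -> vec N) :
  (3 <= N)%nat ->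
  0 < alpha -> alpha < INR N ->
  (* (V1) *)
  cont_scalar V ->
  (forall x, 0 <= V x) ->
  forall Vinf : R, lim_infty V Vinf -> 0 < Vinf ->
  (* (V2) *)
  (forall x, V x <= Vinf) ->
  (* (V3) *)
  C1_with_gradient V gradV ->
  forall theta : R, 0 <= theta -> theta < 1 ->
  (forall x : vec N, x <> vzero ->
     forall s t : R, 0 < s -> s <= t ->
       (INR N * V (vscal t x) + dot (gradV (vscal t x)) (vscal t x)) / Rpower t alpha
         + (INR N - 2) ^ 3 * theta / (4 * Rpower t (alpha + 2) * (vnorm x) ^ 2)
       <=
       (INR N * V (vscal s x) + dot (gradV (vscal s x)) (vscal s x)) / Rpower s alpha
         + (INR N - 2) ^ 3 * theta / (4 * Rpower s (alpha + 2) * (vnorm x) ^ 2)) ->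
  (* conclusion: |grad V(x) . x| -> 0 as |x| -> infinity *)
  lim_infty (fun x => Rabs (dot (gradV x) x)) 0.
Proof.
  move=> HN Ha Han Hc Hpos Vinf Hlim Hvinf Hle [HG Hgc] theta Ht0 Ht1 Hmono eta Heta.
  set Nr := INR N in Han Hmono *.
  have HNr : 3 <= Nr.
  { rewrite /Nr. move/leP: HN => HN. have := le_INR _ _ HN. simpl. lra. }
  set a := alpha in Ha Han Hmono *.
  set M := Nr * Vinf.
  have HM : 0 < M by rewrite /M; nra.
  set L := Rmin 1 (Rmin (1 / a) (eta / (4 * M * a))).
  have HL : 0 < L.
  { rewrite /L. have := Rmult_lt_0_compat _ _ HM Ha. move=> h.
    apply Rmin_pos; [lra|apply Rmin_pos; apply Rdiv_lt_0_compat]; lra. }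
  have HL1 : L <= 1 by apply Rmin_l.
  have HaL : a * L <= 1.
  { have : L <= 1 / a by rewrite /L; eapply Rle_trans; [apply Rmin_r|apply Rmin_l].
    move=> h. have := Rmult_le_compat_l a _ _ (Rlt_le _ _ Ha) h.
    have -> : a * (1 / a) = 1 by field; lra. done. }
  have HaLM : a * L * M <= eta / 4.
  { have : L <= eta / (4 * M * a) by rewrite /L; eapply Rle_trans; [apply Rmin_r|apply Rmin_r].
    move=> h. have := Rmult_le_compat_l (a * M) _ _ ltac:(nra) h.
    have -> : a * M * (eta / (4 * M * a)) = eta / 4 by field; lra.
    move=> h2. nra. }
  set eps := Rmin (Vinf * L / 4) (Rmin (eta * L / 16) (eta / (16 * Nr))).
  have Heps : 0 < eps.
  { rewrite /eps. apply Rmin_pos; [|apply Rmin_pos]; apply Rdiv_lt_0_compat; nra. }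
  have Heps1 : eps <= Vinf * L / 4 by apply Rmin_l.
  have Heps2 : eps <= eta * L / 16 by rewrite /eps; eapply Rle_trans; [apply Rmin_r|apply Rmin_l].
  have Heps3 : Nr * eps <= eta / 16.
  { have : eps <= eta / (16 * Nr) by rewrite /eps; eapply Rle_trans; [apply Rmin_r|apply Rmin_r].
    move=> h. have := Rmult_le_compat_l Nr _ _ ltac:(lra) h.
    have -> : Nr * (eta / (16 * Nr)) = eta / 16 by field; lra. done. }
  set E2 := exp (2 * L).
  have HE2 : 1 <= E2.
  { rewrite /E2. have := exp_ineq1_le (2 * L). lra. }
  set Cc := (Nr - 2) ^ 3 * theta.
  have HCc : 0 <= Cc.
  { rewrite /Cc. apply Rmult_le_pos => //. apply pow_le. lra. }
  set Q := Cc * 16 * E2 / (4 * eta * L).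
  case: (Hlim eps Heps) => Re HRe.
  exists (Rmax 1 (Rmax (Rmax 0 Re * exp L) Q)) => y Hy.
  set r := vnorm y.
  have Hr1 : 1 < r by apply: (Rle_lt_trans _ _ _ (Rmax_l _ _) Hy).
  have HrQ : Q < r by apply: (Rle_lt_trans _ _ _ _ Hy); eapply Rle_trans; [apply Rmax_r|apply Rmax_r].
  have HrR : Rmax 0 Re * exp L < r
    by apply: (Rle_lt_trans _ _ _ _ Hy); eapply Rle_trans; [apply Rmax_l|apply Rmax_r].
  have Hy0 : y <> vzero.
  { move=> h. rewrite /r h vnorm_zero in Hr1. lra. }
  set psi := fun s => V (vscal (exp s) y).
  set W := fun s => dot (gradV (vscal (exp s) y)) (vscal (exp s) y).
  have Hd : forall s, derivable_pt_lim psi s (W s).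
  { move=> s.
    have := derivable_pt_lim_comp exp (fun u => V (vscal u y)) s _ _ (derivable_pt_lim_exp s) (deriv_phi V gradV y (exp s) HG).
    apply: dpl_val. rewrite /W dot_scal_r. ring. }
  set K := Cc / (4 * r ^ 2).
  have HK : 0 <= K.
  { rewrite /K. apply Rmult_le_pos => //. apply Rlt_le, Rinv_0_lt_compat. nra. }
  have HKE : K * E2 <= eta * L / 16.
  { have Hr2 : Q < r ^ 2 by nra.
    have Hr2p : 0 < r ^ 2 by nra.
    rewrite /K /Q in Hr2 |- *.
    apply (Rmult_le_reg_r (4 * r ^ 2)); first lra.
    have -> : Cc / (4 * r ^ 2) * E2 * (4 * r ^ 2) = Cc * E2 by field; lra.
    have : Cc * 16 * E2 <= r ^ 2 * (4 * eta * L).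
    { have h := Rmult_le_compat_r (4 * eta * L) _ _ ltac:(nra) (Rlt_le _ _ Hr2).
      have -> : Cc * 16 * E2 = Cc * 16 * E2 / (4 * eta * L) * (4 * eta * L) by field; nra.
      exact h. }
    nra. }
  have HK16 : K <= eta / 16.
  { have : K <= K * E2 by nra. have : eta * L / 16 <= eta / 16 by nra. lra. }
  have Hmono' : forall s t, s <= t ->
     (Nr * psi t + W t) * exp (-(a * t)) + K * exp (-((a + 2) * t)) <=
     (Nr * psi s + W s) * exp (-(a * s)) + K * exp (-((a + 2) * s)).
  { move=> s t Hst.
    have h := Hmono y Hy0 (exp s) (exp t) (exp_pos s) (exp_le_mono _ _ Hst).
    rewrite /Rpower !ln_exp in h.
    have Hr0 : r <> 0 by lra.
    have conv1 : forall X z, X / exp z = X * exp (- z) by move=> X z; rewrite exp_Ropp.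
    have conv2 : forall z, Cc / (4 * exp z * r ^ 2) = K * exp (- z).
    { move=> z. rewrite exp_Ropp /K. field. split; [have := exp_pos z; lra | exact Hr0]. }
    rewrite -/r -/Cc !conv1 !conv2 in h.
    rewrite /psi /W /a. exact h. }
  have Hnear : forall s, -L <= s -> Vinf - eps < psi s.
  { move=> s Hs. rewrite /psi.
    have Hn : Re < vnorm (vscal (exp s) y).
    { rewrite vnorm_scal Rabs_right; last (apply Rle_ge, Rlt_le, exp_pos). rewrite -/r.
      have h1 : exp (-L) <= exp s by apply exp_le_mono.
      have h2 : exp (-L) * exp L = 1 by rewrite (exp_mul_id _ _ 0) ?exp_0 //; ring.
      have h3 : Rmax 0 Re < exp (-L) * r.
      { have := Rmult_lt_compat_l (exp (-L)) _ _ (exp_pos _) HrR.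
        have -> : exp (-L) * (Rmax 0 Re * exp L) = Rmax 0 Re by rewrite Rmult_comm Rmult_assoc (Rmult_comm (exp L)) h2; ring.
        done. }
      have h4 : exp (-L) * r <= exp s * r by apply Rmult_le_compat_r; lra.
      have := Rmax_r 0 Re. lra. }
    have := HRe _ Hn. move=> /Rabs_def2 [_ h]. lra. }
  have Hpsi0 : psi 0 = V y by rewrite /psi exp_0 vscal_1.
  have HW0 : W 0 = dot (gradV y) y by rewrite /W exp_0 vscal_1.
  have HU := oneD_upper psi W Nr a K Vinf eps L Hd Ha HK HL.
  have HU' : 2 * (Nr * psi 0 + W 0) * (1 - exp (-(a * L)))
      <= 2 * a * (Nr * Vinf) * L + 2 * a * eps + a * K * (exp (2 * L) - 1).
  { apply HU.
    - move=> s [Hs1 Hs2]. have h := Hmono' s 0 Hs2.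
      rewrite !Rmult_0_r !Ropp_0 !exp_0 !Rmult_1_r in h. exact h.
    - move=> s. apply Rmult_le_compat_l; [lra | apply Hle].
    - have := Hnear (-L) ltac:(lra). have := Hle (vscal (exp 0) y). rewrite /psi. lra. }
  have HLo := oneD_lower psi W Nr a K Vinf eps L Hd Ha HK HL.
  have HLo' : - (a * eps) + a * (Nr * (Vinf - eps)) * L <= ((Nr * psi 0 + W 0) + K) * (exp (a * L) - 1).
  { apply HLo.
    - move=> s [Hs1 Hs2]. have h := Hmono' 0 s Hs1.
      rewrite !Rmult_0_r !Ropp_0 !exp_0 !Rmult_1_r in h. exact h.
    - move=> s [Hs1 Hs2]. apply Rmult_le_compat_l; [lra|]. have := Hnear s ltac:(lra). lra.
    - have := Hnear L ltac:(lra). have := Hle (vscal (exp 0) y). rewrite /psi. lra. }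
  have Hpsi_hi : Nr * psi 0 <= M by rewrite /M; apply Rmult_le_compat_l; [lra | apply Hle].
  have Hpsi_lo : M - Nr * eps <= Nr * psi 0.
  { have := Hnear 0 ltac:(lra). move=> h. have := Rmult_le_compat_l Nr _ _ ltac:(lra) (Rlt_le _ _ h). rewrite /M. lra. }
  have Hea : 1 + a * L <= exp (a * L) by apply exp_ineq1_le.
  have He1 : 1 - a * L <= exp (-(a * L)) by have := exp_ineq1_le (-(a * L)); lra.
  have He1ea : exp (-(a * L)) * exp (a * L) = 1 by rewrite (exp_mul_id _ _ 0) ?exp_0 //; ring.
  have He1b : exp (-(a * L)) * (1 + a * L) <= 1.
  { have := Rmult_le_compat_l (exp (-(a * L))) _ _ (Rlt_le _ _ (exp_pos _)) Hea. lra. }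
  have Hup := final_upper (Nr * psi 0 + W 0) a L M eps K E2 (exp (-(a * L))) Nr (psi 0) (W 0) eta
     erefl Ha HL HaL (exp_pos _) He1b HK HM Heta (Rlt_le _ _ Heps) HE2 ltac:(rewrite /M /E2 in HU' |- *; lra)
     Hpsi_lo HaLM Heps3 Heps2 HKE.
  have HP : eps < (M - Nr * eps) * L.
  { have : Nr * eps <= Nr * (Vinf * L / 4) by apply Rmult_le_compat_l; lra.
    have : Vinf * L / 4 <= Vinf / 4 by nra.
    move=> h1 h2.
    have : M - Nr * eps >= 3 * Vinf / 4 * 3 by rewrite /M; nra.
    move=> h3. have : (M - Nr * eps) * L >= 9 * Vinf / 4 * L by nra.
    nra. }
  have Hlow := final_lower (Nr * psi 0 + W 0) a L M eps K (exp (-(a * L))) (exp (a * L)) Nr (psi 0) (W 0) eta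
     erefl Ha HL (exp_pos _) He1ea He1 Hea HK Heta (Rlt_le _ _ Heps) ltac:(lra)
     ltac:(have -> : M - Nr * eps = Nr * (Vinf - eps) by rewrite /M; ring; exact HLo')
     Hpsi_hi HP HaLM Heps3 Heps2 HK16.

  simpl. rewrite Rminus_0_r Rabs_Rabsolu -HW0. apply Rabs_def1; [exact Hup | exact (Hlow HLo')].
Qed.
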